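(* Let $n\ge3$, $n\ne4$, and for $a\in\mathbb{B}^n$ define on $\overline{\mathbb{B}^n}$ $$U_a(x)=\Big(\frac{1-|a|^2}{|a|^2|x|^2-2a\cdot x+1}\Big)^{\frac{n-4}2}+\frac{n-4}4(1-|x|^2)\Big(\frac{1-|a|^2}{|a|^2|x|^2-2a\cdot x+1}\Big)^{\frac{n-2}2}.$$ Then $U_a\in C^\infty(\overline{\mathbb{B}^n})$, $U_a>0$, and with $u=U_a|_{\mathbb{S}^{n-1}}$ it solves $$\Delta^2U_a=0\ \text{in }\mathbb{B}^n,\qquad \frac{\partial U_a}{\partial r}=-\frac{n-4}2u\ \text{on }\mathbb{S}^{n-1},\qquad \mathscr{B}_3^3U_a=\frac{n(n-2)(n-4)}4u^{\frac{n+2}{n-4}}\ \text{on }\mathbb{S}^{n-1}.$$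
   Context: For $U$ smooth on $\overline{\mathbb{B}^n}$ satisfying $\partial_rU=-\frac{n-4}2u$ on $\mathbb{S}^{n-1}$ with $u=U|_{\mathbb{S}^{n-1}}$, $$\mathscr{B}_3^3U=-\frac{\partial\Delta U}{\partial r}-\frac{n-4}2\frac{\partial^2U}{\partial r^2}-\frac n2\Delta_{\mathbb{S}^{n-1}}u+\frac{(n-4)(n^2-3n+4)}4u\quad\text{on }\mathbb{S}^{n-1}.$$ *)

(* Defs.v *)
From HB Require Import structures.
From mathcomp Require Import all_boot all_order all_algebra.
From mathcomp Require Import all_classical all_reals all_analysis.
Set Implicit Arguments. Unset Strict Implicit. Unset Printing Implicit Defensive.
Import Order.TTheory GRing.Theory Num.Theory.
Import numFieldNormedType.Exports.
Local Open Scope ring_scope.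

Section Defs.
Variables (R : realType) (n : nat).
Implicit Types (x y a : 'rV[R]_n) (f : 'rV[R]_n -> R).

Definition edot x y : R := \sum_(i < n) x ord0 i * y ord0 i.
Definition enorm2 x : R := edot x x.
Definition enorm x : R := Num.sqrt (enorm2 x).

Definition ebasis (i : 'I_n) : 'rV[R]_n := delta_mx ord0 i.
Definition partial (i : 'I_n) f : 'rV[R]_n -> R := fun x => 'D_(ebasis i) f x.

Definition iter_partial (s : seq 'I_n) f : 'rV[R]_n -> R :=
  foldr (fun i g => partial i g) f s.

Definition smooth_on (O : set 'rV[R]_n) f : Prop :=
  forall (s : seq 'I_n) x, O x -> differentiable (iter_partial s f) x.

Definition lap f : 'rV[R]_n -> R := fun x => \sum_(i < n) partial i (partial i f) x.

(* radial derivatives at a point x of the unit sphere: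
   d/dt U(t x) at t = 1 and d^2/dt^2 U(t x) at t = 1 *)
Definition drad f x : R := 'D_x f x.
Definition drad2 f x : R := 'D_x ('D_x f) x.

(* Laplace-Beltrami operator of the sphere applied to u = U|_{S^{n-1}}:
   Euclidean Laplacian of the 0-homogeneous extension y |-> U(y/|y|) *)
Definition sph_lap f x : R := lap (fun y => f ((enorm y)^-1 *: y)) x.

Definition B33 f x : R :=
  - drad (lap f) x - ((n%:R - 4) / 2) * drad2 f x
  - (n%:R / 2) * sph_lap f x
  + ((n%:R - 4) * (n%:R ^+ 2 - 3 * n%:R + 4) / 4) * f x.

Definition Ua a : 'rV[R]_n -> R := fun x =>
  let q := (1 - enorm2 a) / (enorm2 a * enorm2 x - 2 * edot a x + 1) in
  q `^ ((n%:R - 4) / 2)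
  + ((n%:R - 4) / 4) * (1 - enorm2 x) * q `^ ((n%:R - 2) / 2).

End Defs.

(* Main.v *)
Require Import Defs.
From HB Require Import structures.
From mathcomp Require Import all_boot all_order all_algebra.
From mathcomp Require Import all_classical all_reals all_analysis.
From mathcomp Require Import ring lra.
Set Implicit Arguments. Unset Strict Implicit. Unset Printing Implicit Defensive.
Import Order.TTheory GRing.Theory Num.Theory.
Import numFieldNormedType.Exports.
Local Open Scope ring_scope.
Local Open Scope classical_set_scope.

Section Expr.
Variables (R : realType) (n : nat).
Local Notation V := ('rV[R]_n).

Lemma coordD (i : 'I_n) (x v : V) :
  differentiable (fun y : V => y ord0 i) x /\ 'D_v (fun y : V => y ord0 i) x = v ord0 i.
Proof.
split; first exact: differentiable_coord.
rewrite deriveE; last exact: differentiable_coord.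
have @f : {linear V -> R}.
  by exists (fun N : V => N ord0 i); do 2![eexists]; do ?[constructor];
     rewrite ?mxE// => ? *; rewrite ?mxE//; move=> ?; rewrite !mxE.
rewrite (_ : (fun _ => _) = f) // diff_lin //; exact: coord_continuous.
Qed.

Lemma sumD (F : 'I_n -> V -> R) (dF : 'I_n -> R) x v :
  (forall i, differentiable (F i) x /\ 'D_v (F i) x = dF i) ->
  differentiable (fun y : V => \sum_(i < n) F i y) x /\
  'D_v (fun y : V => \sum_(i < n) F i y) x = \sum_(i < n) dF i.
Proof.
move=> H.
have -> : (fun y : V => \sum_(i < n) F i y) = \sum_(i < n) F i.
  by apply/funext => y; rewrite fct_sumE.
split; first by apply: differentiable_sum => i; case: (H i).
rewrite derive_sum; last by move=> i; apply: diff_derivable; case: (H i).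
by apply: eq_bigr => i _; case: (H i).
Qed.

Lemma mulD (f g : V -> R) x v :
  differentiable f x -> differentiable g x ->
  differentiable (fun y => f y * g y) x /\
  'D_v (fun y => f y * g y) x = 'D_v f x * g x + f x * 'D_v g x.
Proof.
move=> df dg; change (fun y => f y * g y) with (f * g).
split; first exact: differentiableM.
rewrite deriveM; [|exact: diff_derivable|exact: diff_derivable].
by rewrite /GRing.scale /= addrC mulrC.
Qed.

Lemma addD (f g : V -> R) x v :
  differentiable f x -> differentiable g x ->
  differentiable (fun y => f y + g y) x /\
  'D_v (fun y => f y + g y) x = 'D_v f x + 'D_v g x.
Proof.
move=> df dg; change (fun y => f y + g y) with (f + g).
split; first exact: differentiableD.
by rewrite deriveD; [|exact: diff_derivable|exact: diff_derivable].
Qed.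

Lemma powD (f : V -> R) (r : R) x v :
  0 < f x -> differentiable f x ->
  differentiable (fun y => f y `^ r) x /\
  'D_v (fun y => f y `^ r) x = r * f x `^ (r - 1) * 'D_v f x.
Proof.
move=> fx df.
have dp : differentiable (fun z : R => z `^ r) (f x).
  apply/derivable1_diffP; apply: (@derivable_powR R 1 r (f x)); by rewrite in_itv /= fx.
change (fun y => f y `^ r) with ((fun z : R => z `^ r) \o f).
split; first exact: differentiable_comp.
rewrite deriveE; last exact: differentiable_comp.
rewrite diff_comp // /= diff1E // powR_derive1 ?in_itv /= ?fx //.
by rewrite -deriveE // /GRing.scale /= mulrC.
Qed.


Lemma near_diff (f g : V -> R) x : differentiable f x ->
  (\forall y \near x, f y = g y) -> differentiable g x.
Proof.
move=> df fg.
have gx : g x = f x by rewrite (nbhs_singleton fg).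
have /eqaddoP hf := diff_locally df.
have fg0 : \forall h \near 0, f (h + x) = g (h + x).
  by move: fg; rewrite (near_shift 0) => /=; apply: filterS => h; rewrite subr0.
have eqg : g \o shift x = cst (g x) + 'd f x +o_ 0 id.
  apply/eqaddoP => e e0.
  have := hf e e0; apply: filter_app; move: fg0; apply: filter_app.
  by apply: filterE => h /= E; rewrite !fctE /= -E gx.
have dg := diff_unique (diff_continuous df) eqg.
by apply/diff_locallyP; rewrite dg; split => //; exact: diff_continuous.
Qed.

Lemma cstD (c : R) (x v : V) :
  differentiable (fun _ : V => c) x /\ 'D_v (fun _ : V => c) x = 0.
Proof. split; [exact: differentiable_cst | exact: derive_cst]. Qed.

Inductive ex := Cst of R | Z0 | One | Sq | Lin of V | Add of ex & ex | Mul of ex & ex | Pw of ex & R.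

Fixpoint ev (x : V) (e : ex) : R :=
  match e with
  | Cst r => r | Z0 => 0 | One => 1 | Sq => enorm2 x | Lin b => edot b x
  | Add e1 e2 => ev x e1 + ev x e2 | Mul e1 e2 => ev x e1 * ev x e2
  | Pw e r => ev x e `^ r end.

Definition mkAdd (e1 e2 : ex) : ex :=
  match e1 with Z0 => e2 | _ => match e2 with Z0 => e1 | _ => Add e1 e2 end end.
Definition mkMul (e1 e2 : ex) : ex :=
  match e1 with Z0 => Z0 | One => e2
  | _ => match e2 with Z0 => Z0 | One => e1 | _ => Mul e1 e2 end end.

Arguments mkAdd : simpl never.
Arguments mkMul : simpl never.

Lemma evA x e1 e2 : ev x (mkAdd e1 e2) = ev x e1 + ev x e2.
Proof. by case: e1 => [?||||?|??|??|??]; case: e2 => [?||||?|??|??|??]; rewrite /mkAdd /= ?add0r ?addr0. Qed.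
Lemma evM x e1 e2 : ev x (mkMul e1 e2) = ev x e1 * ev x e2.
Proof. by case: e1 => [?||||?|??|??|??]; case: e2 => [?||||?|??|??|??]; rewrite /mkMul /= ?mul0r ?mulr0 ?mul1r ?mulr1. Qed.

Fixpoint dd (v : V) (e : ex) : ex :=
  match e with
  | Cst _ | Z0 | One => Z0 | Sq => Mul (Cst 2) (Lin v) | Lin b => Cst (edot b v)
  | Add e1 e2 => mkAdd (dd v e1) (dd v e2)
  | Mul e1 e2 => mkAdd (mkMul (dd v e1) e2) (mkMul e1 (dd v e2))
  | Pw e r => mkMul (Mul (Cst r) (Mul (Pw e r) (Pw e (-1)))) (dd v e) end.

Fixpoint pos (x : V) (e : ex) : Prop :=
  match e with
  | Add e1 e2 | Mul e1 e2 => pos x e1 /\ pos x e2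
  | Pw e r => 0 < ev x e /\ pos x e
  | _ => True end.

Lemma posA x e1 e2 : pos x e1 -> pos x e2 -> pos x (mkAdd e1 e2).
Proof. by case: e1 => [?||||?|??|??|??]; case: e2 => [?||||?|??|??|??]; rewrite /mkAdd /mkMul. Qed.
Lemma posM x e1 e2 : pos x e1 -> pos x e2 -> pos x (mkMul e1 e2).
Proof. by case: e1 => [?||||?|??|??|??]; case: e2 => [?||||?|??|??|??]; rewrite /mkAdd /mkMul. Qed.

Lemma pos_dd x v e : pos x e -> pos x (dd v e).
Proof.
elim: e => //= [e1 IH1 e2 IH2 [h1 h2]|e1 IH1 e2 IH2 [h1 h2]|e IH r [h1 h2]].
- by apply: posA; auto.
- by apply: posA; apply: posM; auto.
- by apply: posM; auto; repeat split.
Qed.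

Lemma evD e x : pos x e ->
  differentiable (ev^~ e) x /\ forall v, 'D_v (ev^~ e) x = ev x (dd v e).
Proof.
elim: e => /=.
- move=> r _; split; [exact: (cstD r x 0).1| move=> v; exact: (cstD r x v).2].
- move=> _; split; [exact: (cstD 0 x 0).1| move=> v; exact: (cstD 0 x v).2].
- move=> _; split; [exact: (cstD 1 x 0).1| move=> v; exact: (cstD 1 x v).2].
- move=> _.
  have H v : differentiable (fun y : V => \sum_(i < n) (y ord0 i * y ord0 i)) x /\
     'D_v (fun y : V => \sum_(i < n) (y ord0 i * y ord0 i)) x =
     \sum_(i < n) (v ord0 i * x ord0 i + x ord0 i * v ord0 i).
    apply: (@sumD (fun i (y : V) => y ord0 i * y ord0 i)) => i.
    have [d1 e1] := coordD i x v.
    have [d2 e2] := @mulD (fun y : V => y ord0 i) (fun y : V => y ord0 i) x v d1 d1.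
    by split => //; rewrite e2 e1.
  split; first exact: (H 0).1.
  move=> v; rewrite /enorm2 /edot (H v).2 big_distrr /=.
  by apply: eq_bigr => i _; ring.
- move=> b _.
  have H v : differentiable (fun y : V => \sum_(i < n) (b ord0 i * y ord0 i)) x /\
     'D_v (fun y : V => \sum_(i < n) (b ord0 i * y ord0 i)) x =
     \sum_(i < n) (b ord0 i * v ord0 i).
    apply: (@sumD (fun i (y : V) => b ord0 i * y ord0 i)) => i.
    have [d1 e1] := coordD i x v.
    have [d0 e0] := cstD (b ord0 i) x v.
    have [d2 e2] := @mulD (fun _ : V => b ord0 i) (fun y : V => y ord0 i) x v d0 d1.
    by split => //; rewrite e2 e0 e1 mul0r add0r.
  split; first exact: (H 0).1.
  by move=> v; rewrite /edot (H v).2.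
- move=> e1 IH1 e2 IH2 [/IH1 [d1 D1] /IH2 [d2 D2]].
  split; first exact: (@addD _ _ x 0 d1 d2).1.
  by move=> v; rewrite (@addD _ _ x v d1 d2).2 D1 D2 evA.
- move=> e1 IH1 e2 IH2 [/IH1 [d1 D1] /IH2 [d2 D2]].
  split; first exact: (@mulD _ _ x 0 d1 d2).1.
  by move=> v; rewrite (@mulD _ _ x v d1 d2).2 D1 D2 evA !evM.
- move=> e IH r [p /IH [d D]].
  split; first exact: (@powD _ r x 0 p d).1.
  move=> v; rewrite (@powD _ r x v p d).2 D evM /=.
  rewrite powRD; first by rewrite mulrA.
  by apply/implyP => _; rewrite gt_eqF.
Qed.

Lemma edot_e (i : 'I_n) (y : V) : edot (ebasis R i) y = y ord0 i.
Proof.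
rewrite /edot /ebasis (bigD1 i) //= !mxE !eqxx /= mul1r big1 ?addr0 // => j ji.
by rewrite !mxE eqxx /= (negbTE ji) mul0r.
Qed.

Lemma edot_e' (i : 'I_n) (y : V) : edot y (ebasis R i) = y ord0 i.
Proof.
rewrite /edot /ebasis (bigD1 i) //= !mxE !eqxx /= mulr1 big1 ?addr0 // => j ji.
by rewrite !mxE eqxx /= (negbTE ji) mulr0.
Qed.

Lemma edotC (x y : V) : edot x y = edot y x.
Proof. by rewrite /edot; apply: eq_bigr => i _; rewrite mulrC. Qed.

Definition dds (s : seq 'I_n) e := foldr (fun i g => dd (ebasis R i) g) e s.

Lemma pos_dds x s e : pos x e -> pos x (dds s e).
Proof. by elim: s => //= i s IH /IH; apply: pos_dd. Qed.

Lemma nearO {O : set V} {x : V} : open O -> O x -> \forall y \near x, O y.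
Proof. by move=> oO Ox; apply: open_nbhs_nbhs. Qed.

Lemma iter_eq (O : set V) (f g : V -> R) s : open O -> (forall y, O y -> f y = g y) ->
  forall y, O y -> iter_partial s f y = iter_partial s g y.
Proof.
move=> oO fg; elim: s => [|i s IH] y Oy /=; first exact: fg.
rewrite /partial; apply: near_eq_derive.
have := nearO oO Oy; apply: filterS => z Oz; exact: IH.
Qed.

Lemma iter_ev (O : set V) e s : open O -> (forall y, O y -> pos y e) ->
  forall y, O y -> iter_partial s (ev^~ e) y = ev y (dds s e).
Proof.
move=> oO pe; elim: s => [|i s IH] y Oy //=.
rewrite /partial (@near_eq_derive _ _ _ _ (ev^~ (dds s e))).
  by rewrite (evD (pos_dds s (pe y Oy))).2.
have := nearO oO Oy; apply: filterS => z Oz; exact: IH.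
Qed.

Lemma smooth_ev (O : set V) e : open O -> (forall y, O y -> pos y e) ->
  smooth_on O (ev^~ e).
Proof.
move=> oO pe s x Ox.
apply: (near_diff (evD (pos_dds s (pe x Ox))).1).
have := nearO oO Ox; apply: filterS => y Oy /=.
by rewrite (iter_ev s oO pe Oy).
Qed.

Lemma smooth_eq (O : set V) (f g : V -> R) : open O -> (forall y, O y -> f y = g y) ->
  smooth_on O g -> smooth_on O f.
Proof.
move=> oO fg sg s x Ox; apply: (near_diff (sg s x Ox)).
have := nearO oO Ox; apply: filterS => y Oy /=; by rewrite (iter_eq s oO fg Oy).
Qed.

Section Lap.
Variable a : V.

Fixpoint isTa (e : ex) : Prop :=
  match e with
  | Lin b => b = a
  | Add e1 e2 | Mul e1 e2 => isTa e1 /\ isTa e2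
  | Pw e _ => isTa e
  | _ => True end.

Lemma isTA e1 e2 : isTa e1 -> isTa e2 -> isTa (mkAdd e1 e2).
Proof. by case: e1 => [?||||?|??|??|??]; case: e2 => [?||||?|??|??|??]; rewrite /mkAdd /mkMul. Qed.
Lemma isTM e1 e2 : isTa e1 -> isTa e2 -> isTa (mkMul e1 e2).
Proof. by case: e1 => [?||||?|??|??|??]; case: e2 => [?||||?|??|??|??]; rewrite /mkAdd /mkMul. Qed.

Fixpoint dS (e : ex) : ex :=
  match e with
  | Cst _ | Lin _ | Z0 | One => Z0 | Sq => One
  | Add e1 e2 => mkAdd (dS e1) (dS e2)
  | Mul e1 e2 => mkAdd (mkMul (dS e1) e2) (mkMul e1 (dS e2))
  | Pw e r => mkMul (Mul (Cst r) (Mul (Pw e r) (Pw e (-1)))) (dS e) end.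

Fixpoint dT (e : ex) : ex :=
  match e with
  | Cst _ | Sq | Z0 | One => Z0 | Lin _ => One
  | Add e1 e2 => mkAdd (dT e1) (dT e2)
  | Mul e1 e2 => mkAdd (mkMul (dT e1) e2) (mkMul e1 (dT e2))
  | Pw e r => mkMul (Mul (Cst r) (Mul (Pw e r) (Pw e (-1)))) (dT e) end.

Lemma isT_dS e : isTa e -> isTa (dS e).
Proof.
elim: e => //= [e1 IH1 e2 IH2 [h1 h2]|e1 IH1 e2 IH2 [h1 h2]|e IH r h].
- by apply: isTA; auto.
- by apply: isTA; apply: isTM; auto.
- by apply: isTM; auto.
Qed.
Lemma isT_dT e : isTa e -> isTa (dT e).
Proof.
elim: e => //= [e1 IH1 e2 IH2 [h1 h2]|e1 IH1 e2 IH2 [h1 h2]|e IH r h].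
- by apply: isTA; auto.
- by apply: isTA; apply: isTM; auto.
- by apply: isTM; auto.
Qed.
Lemma pos_dS x e : pos x e -> pos x (dS e).
Proof.
elim: e => //= [e1 IH1 e2 IH2 [h1 h2]|e1 IH1 e2 IH2 [h1 h2]|e IH r [h1 h2]].
- by apply: posA; auto.
- by apply: posA; apply: posM; auto.
- by apply: posM; auto; repeat split.
Qed.
Lemma pos_dT x e : pos x e -> pos x (dT e).
Proof.
elim: e => //= [e1 IH1 e2 IH2 [h1 h2]|e1 IH1 e2 IH2 [h1 h2]|e IH r [h1 h2]].
- by apply: posA; auto.
- by apply: posA; apply: posM; auto.
- by apply: posM; auto; repeat split.
Qed.

Lemma chain x v e : isTa e ->
  ev x (dd v e) = 2 * edot v x * ev x (dS e) + edot a v * ev x (dT e).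
Proof.
elim: e => /=.
- move=> *; ring.
- move=> *; ring.
- move=> *; ring.
- move=> *; ring.
- by move=> b ->; ring.
- by move=> e1 IH1 e2 IH2 [/IH1 + /IH2]; rewrite !evA => -> ->; ring.
- by move=> e1 IH1 e2 IH2 [/IH1 + /IH2]; rewrite !evA !evM => -> ->; ring.
- by move=> e IH r /IH; rewrite !evM => ->; ring.
Qed.

Definition Lop e := Add (Add (Add (Add
  (Mul (Cst (2 * n%:R)) (dS e))
  (Mul (Mul (Cst 4) Sq) (dS (dS e))))
  (Mul (Mul (Cst 2) (Lin a)) (dS (dT e))))
  (Mul (Mul (Cst 2) (Lin a)) (dT (dS e))))
  (Mul (Cst (enorm2 a)) (dT (dT e))).

Lemma isT_Lop e : isTa e -> isTa (Lop e).
Proof. by move=> h; rewrite /Lop /=; repeat split; auto using isT_dS, isT_dT. Qed.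
Lemma pos_Lop x e : pos x e -> pos x (Lop e).
Proof. by move=> h; rewrite /Lop /=; repeat split; auto using pos_dS, pos_dT. Qed.

Lemma lap_ev (O : set V) e x : open O -> (forall y, O y -> pos y e) -> isTa e -> O x ->
  lap (ev^~ e) x = ev x (Lop e).
Proof.
move=> oO pe te Ox.
pose G i := Add (Mul (Mul (Cst 2) (Lin (ebasis R i))) (dS e)) (Mul (Cst (edot a (ebasis R i))) (dT e)).
have step i : partial i (partial i (ev^~ e)) x =
   2 * ev x (dS e) + 4 * ev x (dS (dS e)) * (x ord0 i * x ord0 i)
   + 2 * ev x (dT (dS e)) * (a ord0 i * x ord0 i) + 2 * ev x (dS (dT e)) * (a ord0 i * x ord0 i)
   + ev x (dT (dT e)) * (a ord0 i * a ord0 i).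
  rewrite /partial (@near_eq_derive _ _ _ _ (ev^~ (G i))); last first.
    have := nearO oO Ox; apply: filterS => y Oy /=.
    by rewrite (evD (pe y Oy)).2 chain.
  have tS := isT_dS te; have tT := isT_dT te.
  have pG : pos x (G i) by rewrite /G /=; repeat split; auto using pos_dS, pos_dT.
  rewrite (evD pG).2 /G /= !evA !evM /= !chain ?isT_dS ?isT_dT //.
  rewrite (edot_e i x) (edot_e i (ebasis R i)) (edot_e' i a) /ebasis !mxE !eqxx /=.
  ring.
rewrite /lap (eq_bigr _ (fun i _ => step i)) !big_split /= -!mulr_sumr sumr_const card_ord.
rewrite /Lop /= /enorm2 /edot.
ring.
Qed.

End Lap.

End Expr.
Arguments Cst {R n}. Arguments Sq {R n}. Arguments Lin {R n}. Arguments Add {R n}.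
Arguments Mul {R n}. Arguments Pw {R n}.


Section Spec.
Variables (R : realType) (n : nat) (a : 'rV[R]_n).
Local Notation V := ('rV[R]_n).
Local Notation ex := (ex R n).
Definition N : R := n%:R.
Definition A2 : R := enorm2 a.
Definition Aa : R := 1 - A2.
Definition al : R := (N - 4) / 2.
Definition be : R := (N - 2) / 2.
Definition cc : R := (N - 4) / 4.

Definition Wf (es et : ex) : ex := Add (Add (Mul (Cst A2) es) (Mul (Cst (-2)) et)) (Cst 1).
Definition eUf (es et : ex) : ex :=
  Add (Mul (Cst (Aa `^ al)) (Pw (Wf es et) (- al)))
      (Mul (Mul (Cst cc) (Add (Cst 1) (Mul (Cst (-1)) es)))
           (Mul (Cst (Aa `^ be)) (Pw (Wf es et) (- be)))).
Definition eU := eUf Sq (Lin a).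

Lemma powQ (w : R) : 0 < w -> w `^ (- be) = w `^ (- al) * w^-1.
Proof.
move=> w0; rewrite -powR_inv1 ?ltW // -powRD; last by apply/implyP => _; rewrite gt_eqF.
by congr (_ `^ _); rewrite /be /al; field.
Qed.

Lemma bih x : 0 < A2 * enorm2 x + -2 * edot a x + 1 ->
  ev x (Lop a (Lop a eU)) = 0.
Proof.
move=> w0.
cbv beta iota zeta delta [eU eUf Wf Lop dS dT mkMul mkAdd ev].
set w := A2 * enorm2 x + -2 * edot a x + 1.
rewrite !powQ // !powR_inv1 ?ltW //.
set P := w `^ (-al).
rewrite /al /be /cc /A2.
clearbody P. rewrite /w /A2.
field.
by rewrite gt_eqF.
Qed.

Lemma cs (y : V) (p q : R) : 0 <= p ^+ 2 * enorm2 y - 2 * p * q * edot a y + q ^+ 2 * enorm2 a.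
Proof.
have -> : p ^+ 2 * enorm2 y - 2 * p * q * edot a y + q ^+ 2 * enorm2 a =
   \sum_(i < n) (p * y ord0 i - q * a ord0 i) ^+ 2.
  rewrite /enorm2 /edot !mulr_sumr -sumrN -!big_split /=.
  by apply: eq_bigr => i _; ring.
by apply: sumr_ge0 => i _; rewrite sqr_ge0.
Qed.

Lemma enorm2_ge0 (y : V) : 0 <= enorm2 y.
Proof. by have := cs y 1 0; rewrite expr1n mul1r !mulr0 mul0r subr0 expr0n /= mul0r addr0. Qed.

Lemma enorm2_le1 (y : V) : enorm y <= 1 -> enorm2 y <= 1.
Proof.
move=> h; have h0 := enorm2_ge0 y.
rewrite -(sqr_sqrtr h0) -/(enorm y); rewrite -[1](expr1n _ 2).
by rewrite ler_pXn2r ?nnegrE ?sqrtr_ge0.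
Qed.

Lemma enorm2_lt1 (y : V) : enorm y < 1 -> enorm2 y < 1.
Proof.
move=> h; have h0 := enorm2_ge0 y.
rewrite -(sqr_sqrtr h0) -/(enorm y); rewrite -[1](expr1n _ 2).
by rewrite ltr_pXn2r ?nnegrE ?sqrtr_ge0.
Qed.

Lemma enorm2_eq1 (y : V) : enorm y = 1 -> enorm2 y = 1.
Proof.
move=> h; have h0 := enorm2_ge0 y.
by rewrite -(sqr_sqrtr h0) -/(enorm y) h expr1n.
Qed.

Lemma ballW (y : V) : enorm a < 1 -> enorm y <= 1 ->
  0 < A2 * enorm2 y + -2 * edot a y + 1.
Proof.
move=> ha hy; have s1 := enorm2_le1 hy; have A1 : A2 < 1 := enorm2_lt1 ha.
have A0 : 0 <= A2 := enorm2_ge0 a.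
set mu := (1 + A2) / 2.
have := cs y mu 1; rewrite -/A2 expr1n mulr1 mul1r => h.
have mu0 : 0 < mu by rewrite /mu; lra.
set s := enorm2 y in h s1 *; set t := edot a y in h *.
have h1 : 0 <= (mu * (mu - A2)) * (1 - s).
  apply: mulr_ge0; last lra.
  apply: mulr_ge0; rewrite /mu; lra.
have sq : 0 < (1 - A2) ^+ 2 by rewrite exprn_gt0 // subr_gt0.
have : 0 < mu * (A2 * s + -2 * t + 1).
  have -> : mu * (A2 * s + -2 * t + 1) = (mu ^+ 2 * s - 2 * mu * t + A2)
     + (mu * (mu - A2)) * (1 - s) + (1 - A2) ^+ 2 / 4 by rewrite /mu; field.
  move: h h1 sq; set P1 := mu ^+ 2 * s - 2 * mu * t + A2; set P2 := (mu * (mu - A2)) * (1 - s).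
  set P3 := (1 - A2) ^+ 2; lra.
by rewrite pmulr_rgt0.
Qed.

Definition Uf (s t : R) : R :=
  let q := (1 - A2) / (A2 * s - 2 * t + 1) in
  q `^ ((N - 4) / 2) + ((N - 4) / 4) * (1 - s) * q `^ ((N - 2) / 2).

Lemma Ua_form (y : V) : Ua a y = Uf (enorm2 y) (edot a y).
Proof. by []. Qed.

Lemma qpow (b W r : R) : 0 <= b -> 0 < W -> (b / W) `^ r = b `^ r * W `^ (- r).
Proof.
move=> b0 W0; rewrite powRM //; last by rewrite invr_ge0 ltW.
by rewrite -powR_inv1 ?ltW // -powRrM mulN1r.
Qed.

Lemma evUf (y : V) es et : 0 < ev y (Wf es et) -> 0 <= Aa ->
  ev y (eUf es et) = Uf (ev y es) (ev y et).
Proof.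
rewrite /eUf /Uf /Wf /= => W0 A0.
have -> : A2 * ev y es - 2 * ev y et + 1 = A2 * ev y es + -2 * ev y et + 1 by ring.
rewrite !qpow // -/Aa /al /be /cc; ring.
Qed.

Definition Wu : ex := Wf Sq (Lin a).
Definition OU : set V := [set y | 0 < ev y Wu].

Lemma open_OU : open OU.
Proof.
have -> : OU = (fun y : V => ev y Wu) @^-1` [set r : R | 0 < r] by [].
apply: open_comp; last exact: open_gt.
move=> y _; apply: differentiable_continuous.
have pW : pos y Wu by rewrite /Wu /Wf /=; repeat split.
by have [] := evD pW.
Qed.

Lemma Ua_OU (y : V) : enorm a < 1 -> OU y -> Ua a y = ev y eU.
Proof.
move=> ha Oy; rewrite Ua_form evUf //=.
by rewrite /Aa subr_ge0 ltW // enorm2_lt1.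
Qed.

Lemma pos_eU (y : V) : OU y -> pos y eU.
Proof. by rewrite /OU /eU /eUf /= => h; repeat split. Qed.

Lemma isT_eU : isTa a eU.
Proof. by rewrite /eU /eUf /=; repeat split. Qed.
End Spec.


Section Main.
Variables (R : realType) (n : nat) (a : 'rV[R]_n).
Local Notation V := ('rV[R]_n).

Lemma lap_eq (O : set V) (f g : V -> R) y : open O -> (forall z, O z -> f z = g z) -> O y ->
  lap f y = lap g y.
Proof.
move=> oO fg Oy; rewrite /lap; apply: eq_bigr => i _.
exact: (iter_eq [:: i; i] oO fg Oy).
Qed.

Lemma smooth_part : enorm a < 1 ->
  exists O : set V, open O /\ [set x | enorm x <= 1] `<=` O /\ smooth_on O (Ua a).
Proof.
move=> ha; exists (OU a); split; first exact: open_OU.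
split; first by move=> y /= hy; rewrite /OU /Wu /Wf /=; exact: ballW.
have := smooth_eq (@open_OU _ _ a) (fun y Oy => Ua_OU ha Oy); apply.
apply: smooth_ev; first exact: open_OU.
by move=> y; apply: pos_eU.
Qed.

Lemma pos_part (x : V) : (3 <= n)%N -> enorm a < 1 -> enorm x <= 1 -> 0 < Ua a x.
Proof.
move=> n3 ha hx.
have W0 := ballW ha hx.
have A1 : A2 a < 1 := enorm2_lt1 a ha.
have A0 : 0 <= A2 a := enorm2_ge0 a a.
have s1 := enorm2_le1 a hx.
have N3 : 3 <= N R n by rewrite /N (ler_nat R 3 n).
have := cs a x 1 1; rewrite !expr1n !mul1r mulr1 -/(A2 a) => hc.
rewrite Ua_form /Uf.
have -> : A2 a * enorm2 x - 2 * edot a x + 1 = A2 a * enorm2 x + -2 * edot a x + 1 by ring.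
set W := A2 a * enorm2 x + -2 * edot a x + 1 in W0 *.
set q := (1 - A2 a) / W.
have q0 : 0 < q by rewrite /q divr_gt0 // subr_gt0.
have -> : q `^ ((N R n - 2) / 2) = q `^ ((N R n - 4) / 2) * q.
  rewrite -{3}(powRr1 (ltW q0)) -powRD; last by apply/implyP => _; rewrite gt_eqF.
  by congr (_ `^ _); field.
have p0 : 0 < q `^ ((N R n - 4) / 2) by apply: powR_gt0.
have u1 : (1 - enorm2 x) * q <= 1.
  rewrite /q mulrA ler_pdivrMr // mul1r /W.
  move: hc; set s := enorm2 x; set t := edot a x; set b := A2 a; lra.
have u0 : 0 <= (1 - enorm2 x) * q by apply: mulr_ge0; lra.
have -> : q `^ ((N R n - 4) / 2) + (N R n - 4) / 4 * (1 - enorm2 x) *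
   (q `^ ((N R n - 4) / 2) * q) = q `^ ((N R n - 4) / 2) * (1 + (N R n - 4) / 4 * ((1 - enorm2 x) * q)) by ring.
apply: mulr_gt0 => //.
move: u1 u0 N3; set u := (1 - enorm2 x) * q; set M := N R n; nra.
Qed.


Lemma powA : enorm a < 1 -> Aa a `^ be R n = Aa a `^ al R n * Aa a.
Proof.
move=> ha; have A1 : A2 a < 1 := enorm2_lt1 a ha.
have A0 : 0 < Aa a by rewrite /Aa subr_gt0.
rewrite -{3}(powRr1 (ltW A0)) -powRD; last by apply/implyP => _; rewrite gt_eqF.
by congr (_ `^ _); rewrite /al /be; field.
Qed.

Lemma bilap_part (x : V) : enorm a < 1 -> enorm x < 1 -> lap (lap (Ua a)) x = 0.
Proof.
move=> ha hx.
have oO := @open_OU _ _ a.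
have Ox : OU a x by rewrite /OU /Wu /Wf /=; apply: ballW => //; exact: ltW.
have pe : forall y, OU a y -> pos y (eU a) by move=> y; apply: pos_eU.
have e1 : forall y, OU a y -> lap (Ua a) y = ev y (Lop a (eU a)).
  move=> y Oy; rewrite (lap_eq oO (fun z Oz => Ua_OU ha Oz) Oy).
  exact: (lap_ev oO pe (isT_eU a) Oy).
rewrite (lap_eq oO e1 Ox).
rewrite (lap_ev oO (fun y Oy => pos_Lop a (pe y Oy)) (isT_Lop (isT_eU a)) Ox).
exact: bih.
Qed.

Lemma drad_part (x : V) : enorm a < 1 -> enorm x = 1 ->
  drad (Ua a) x = - ((n%:R - 4) / 2) * Ua a x.
Proof.
move=> ha hx.
have oO := @open_OU _ _ a.
have Ox : OU a x by rewrite /OU /Wu /Wf /=; apply: ballW => //; rewrite hx.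
rewrite /drad (@near_eq_derive _ _ _ _ (fun y : V => ev y (eU a))); last first.
  by have := nearO oO Ox; apply: filterS => y Oy; rewrite (Ua_OU ha Oy).
rewrite (evD (pos_eU Ox)).2 (Ua_OU ha Ox).
move: Ox; rewrite /OU /Wu /Wf /= => Ox.
have s1 := enorm2_eq1 a hx.
have s1' : edot x x = 1 by [].
cbv beta iota zeta delta [eU eUf Wf dd mkMul mkAdd ev].
rewrite s1 s1' in Ox *.
set w := A2 a * 1 + -2 * edot a x + 1 in Ox *.
rewrite !powQ // !powR_inv1 ?ltW // (powA ha).
set P := w `^ (- al R n).
clearbody P; rewrite /w /Aa /A2 /al /be /cc /N in Ox *.
field.
by rewrite mulr1 in Ox; rewrite lt0r_neq0.
Qed.

End Main.


Section Sph.
Variables (R : realType) (n : nat) (a : 'rV[R]_n).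
Local Notation V := ('rV[R]_n).
Local Notation ex := (ex R n).

Definition et : ex := Mul (Lin a) (Pw Sq (- 2^-1)).
Definition eS : ex := eUf a (Cst 1) et.
Definition W' : ex := Wf a (Cst 1) et.
Definition O2 : set V := [set y | 0 < enorm2 y /\ 0 < ev y W'].

Lemma near_pos (f : V -> R) y : {for y, continuous f} -> 0 < f y ->
  \forall z \near y, 0 < f z.
Proof.
move=> cf fy; apply: (cf [set r | 0 < r]).
by apply: open_nbhs_nbhs; split => //; exact: open_gt.
Qed.

Lemma open_O2 : open O2.
Proof.
rewrite openE => y [h1 h2].
have c1 : {for y, continuous (fun z : V => ev z Sq)}.
  by apply: differentiable_continuous; have [] := @evD R n Sq y I.
have pW : pos y W' by rewrite /W' /Wf /et /=; repeat split.
have c2 : {for y, continuous (fun z : V => ev z W')}.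
  by apply: differentiable_continuous; have [] := evD pW.
have n1 := near_pos c1 h1; have n2 := near_pos c2 h2.
rewrite /interior /=.
move: n2; apply: filter_app; move: n1; apply: filter_app.
by apply: filterE => z z1 z2; split.
Qed.

Lemma enorm2Z (c : R) (y : V) : enorm2 (c *: y) = c ^+ 2 * enorm2 y.
Proof. by rewrite /enorm2 /edot mulr_sumr; apply: eq_bigr => i _; rewrite !mxE; ring. Qed.

Lemma edotZ (c : R) (y : V) : edot a (c *: y) = c * edot a y.
Proof. by rewrite /edot mulr_sumr; apply: eq_bigr => i _; rewrite !mxE; ring. Qed.

Lemma Ua_O2 (y : V) : enorm a < 1 -> O2 y -> Ua a ((enorm y)^-1 *: y) = ev y eS.
Proof.
move=> ha [s0 W0].
have A1 : A2 a < 1 := enorm2_lt1 a ha.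
rewrite Ua_form /eS evUf //; last by rewrite /Aa subr_ge0 ltW.
rewrite enorm2Z edotZ /=.
have sq : Num.sqrt (enorm2 y) ^+ 2 = enorm2 y by rewrite sqr_sqrtr // ltW.
have q0 : 0 < Num.sqrt (enorm2 y) by rewrite sqrtr_gt0.
congr Uf.
  rewrite /enorm exprVn sq mulVf //; exact: lt0r_neq0.
rewrite powRN powR12_sqrt ?ltW // /enorm; ring.
Qed.

Lemma pos_eS (y : V) : O2 y -> pos y eS.
Proof. by case=> h1 h2; rewrite /eS /eUf /=; repeat split. Qed.

Lemma isT_eS : isTa a eS.
Proof. by rewrite /eS /eUf /=; repeat split. Qed.

Lemma O2x (x : V) : enorm a < 1 -> enorm x = 1 -> O2 x.
Proof.
move=> ha hx; have s1 := enorm2_eq1 a hx.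
split; first by rewrite s1.
rewrite /W' /Wf /et /= s1 powR1 mulr1.
have := ballW ha (y := x); rewrite hx lexx s1 => /(_ isT).
by rewrite !mulr1.
Qed.

End Sph.


Section Alg.
Variables (R : realType) (n : nat) (a : 'rV[R]_n).
Local Notation V := ('rV[R]_n).

Lemma b33_alg (x : V) : enorm a < 1 -> enorm x = 1 ->
  - ev x (dd x (Lop a (eU a))) - ((n%:R - 4) / 2) * ev x (dd x (dd x (eU a)))
  - (n%:R / 2) * ev x (Lop a (eS a)) + ((n%:R - 4) * (n%:R ^+ 2 - 3 * n%:R + 4) / 4) * ev x (eU a)
  = (n%:R * (n%:R - 2) * (n%:R - 4) / 4) *
    (Aa a `^ al R n * Aa a ^+ 3 * ((A2 a + -2 * edot a x + 1) `^ (- al R n)) * (A2 a + -2 * edot a x + 1)^-3).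
Proof.
move=> ha hx.
have s1 := enorm2_eq1 a hx.
have s1' : edot x x = 1 by [].
have W0 : 0 < A2 a + -2 * edot a x + 1.
  by have := ballW ha (y := x); rewrite hx lexx s1 mulr1 => /(_ isT).
cbv beta iota zeta delta [eU eUf Wf eS et Lop dS dT dd mkMul mkAdd ev].
rewrite s1 s1' !powR1.
cbv beta.
rewrite !mulr1.
set w := (A2 a + -2 * edot a x + 1) in W0 *.
rewrite !powQ // !powR_inv1 ?ltW // (powA ha).
set P := w `^ (- al R n).
clearbody P; rewrite /w /Aa /A2 /al /be /cc /N in W0 *.
field.
exact: lt0r_neq0.
Qed.
End Alg.


Section Fin.
Variables (R : realType) (n : nat) (a : 'rV[R]_n).
Local Notation V := ('rV[R]_n).

Lemma OUx (x : V) : enorm a < 1 -> enorm x <= 1 -> OU a x.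
Proof. by move=> ha hx; rewrite /OU /Wu /Wf /=; apply: ballW. Qed.

Lemma lapU (y : V) : enorm a < 1 -> OU a y -> lap (Ua a) y = ev y (Lop a (eU a)).
Proof.
move=> ha Oy; have oO := @open_OU _ _ a.
have pe : forall y, OU a y -> pos y (eU a) by move=> z; apply: pos_eU.
rewrite (lap_eq oO (fun z Oz => Ua_OU ha Oz) Oy).
exact: (lap_ev oO pe (isT_eU a) Oy).
Qed.

Lemma sph_part (x : V) : enorm a < 1 -> enorm x = 1 -> sph_lap (Ua a) x = ev x (Lop a (eS a)).
Proof.
move=> ha hx; have O2 := O2x ha hx; have oO := @open_O2 _ _ a.
rewrite /sph_lap (lap_eq oO (fun y Oy => Ua_O2 ha Oy) O2).
exact: (lap_ev oO (fun y Oy => pos_eS Oy) (isT_eS a) O2).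
Qed.

Lemma dlap_part (x : V) : enorm a < 1 -> enorm x = 1 ->
  drad (lap (Ua a)) x = ev x (dd x (Lop a (eU a))).
Proof.
move=> ha hx; have Ox : OU a x by apply: OUx => //; rewrite hx.
have oO := @open_OU _ _ a.
rewrite /drad (@near_eq_derive _ _ _ _ (fun y : V => ev y (Lop a (eU a)))); last first.
  by have := nearO oO Ox; apply: filterS => y Oy; rewrite (lapU ha Oy).
by rewrite (evD (pos_Lop a (pos_eU Ox))).2.
Qed.

Lemma drad2_part (x : V) : enorm a < 1 -> enorm x = 1 ->
  drad2 (Ua a) x = ev x (dd x (dd x (eU a))).
Proof.
move=> ha hx; have Ox : OU a x by apply: OUx => //; rewrite hx.
have oO := @open_OU _ _ a.
rewrite /drad2 (@near_eq_derive _ _ _ _ (fun y : V => ev y (dd x (eU a)))); last first.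
  have := nearO oO Ox; apply: filterS => y Oy.
  rewrite (@near_eq_derive _ _ _ _ (fun y : V => ev y (eU a))).
    by rewrite (evD (pos_eU Oy)).2.
  by have := nearO oO Oy; apply: filterS => z Oz; rewrite (Ua_OU ha Oz).
by rewrite (evD (pos_dd x (pos_eU Ox))).2.
Qed.

Lemma Uval (x : V) : enorm x = 1 ->
  ev x (eU a) = Aa a `^ al R n * (A2 a + -2 * edot a x + 1) `^ (- al R n).
Proof.
move=> hx; have s1 := enorm2_eq1 a hx.
cbv beta iota zeta delta [eU eUf Wf ev]; rewrite s1 mulr1; ring.
Qed.

End Fin.


Section Pw.
Variables (R : realType) (n : nat) (a : 'rV[R]_n).
Local Notation V := ('rV[R]_n).

Lemma rhs_pow (x : V) : n != 4%N -> enorm a < 1 -> enorm x = 1 ->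
  (ev x (eU a)) `^ ((n%:R + 2) / (n%:R - 4)) =
  Aa a `^ al R n * Aa a ^+ 3 * ((A2 a + -2 * edot a x + 1) `^ (- al R n)) * (A2 a + -2 * edot a x + 1)^-3.
Proof.
move=> n4 ha hx.
have N4 : (n%:R - 4 : R) != 0.
  by rewrite subr_eq0 (_ : 4 = 4%:R :> R) // eqr_nat.
have s1 := enorm2_eq1 a hx.
have W0 : 0 < A2 a + -2 * edot a x + 1.
  by have := ballW ha (y := x); rewrite hx lexx s1 mulr1 => /(_ isT).
have A1 : A2 a < 1 := enorm2_lt1 a ha.
have A0 : 0 < Aa a by rewrite /Aa subr_gt0.
rewrite Uval //.
set w := A2 a + -2 * edot a x + 1 in W0 *.
rewrite powRM ?powR_ge0 // -!powRrM.
have e1 : al R n * ((n%:R + 2) / (n%:R - 4)) = al R n + 3%:R by rewrite /al /N; field.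
have e2 : - al R n * ((n%:R + 2) / (n%:R - 4)) = - al R n + - 3%:R by rewrite /al /N; field.
have h1 : Aa a `^ (al R n + 3%:R) = Aa a `^ al R n * Aa a ^+ 3.
  rewrite powRD; last by apply/implyP => _; rewrite gt_eqF.
  by rewrite powR_mulrn ?ltW.
have h2 : w `^ (- al R n + - 3%:R) = w `^ (- al R n) * w ^- 3.
  rewrite powRD; last by apply/implyP => _; rewrite gt_eqF.
  by rewrite powR_invn ?ltW.
rewrite e1 e2 h1 h2; ring.
Qed.
End Pw.

Unset Implicit Arguments.

Theorem mainTheorem13 (R : realType) (n : nat) (a : 'rV[R]_n) :
  (3 <= n)%N -> n != 4%N -> enorm a < 1 ->
  [/\ (exists O : set 'rV[R]_n,
         open O /\ [set x | enorm x <= 1] `<=` O /\ smooth_on O (Ua a)),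
      (forall x : 'rV[R]_n, enorm x <= 1 -> 0 < Ua a x),
      (forall x : 'rV[R]_n, enorm x < 1 -> lap (lap (Ua a)) x = 0),
      (forall x : 'rV[R]_n, enorm x = 1 ->
         drad (Ua a) x = - ((n%:R - 4) / 2) * Ua a x) &
      (forall x : 'rV[R]_n, enorm x = 1 ->
         B33 (Ua a) x
         = (n%:R * (n%:R - 2) * (n%:R - 4) / 4) * (Ua a x) `^ ((n%:R + 2) / (n%:R - 4)))].
Proof.
move=> n3 n4 ha; split.
- exact: smooth_part.
- by move=> x hx; apply: pos_part.
- by move=> x hx; apply: bilap_part.
- by move=> x hx; apply: drad_part.
- move=> x hx.
  have Ox : OU a x by apply: OUx => //; rewrite hx.
  rewrite /B33 dlap_part // drad2_part // sph_part // (Ua_OU ha Ox) b33_alg //.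
  by rewrite rhs_pow.
Qed.
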